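(* Let $d\in\mathbb N\cup\{\infty\}$, $C>0$, and let ${\boldsymbol\gamma}$ be POD weights with constants $a,C_a$. Put $c:=\sum_{w\in\mathcal U_d}(|w|!)^a\prod_{j\in w}(2^aC^2\gamma_j)\in[1,\infty]$. (1) If ${\boldsymbol\gamma}\in\mathcal S_{d,C}$, then ${\boldsymbol\eta}\le T^\uparrow_{d,C}{\boldsymbol\gamma}\le c\,{\boldsymbol\xi}$, where $\eta_u=C^{2|u|}\gamma_u$ and $\xi_u=C_a(|u|!)^a\prod_{j\in u}(2^aC^2\gamma_j)$. (2) If ${\boldsymbol\gamma}\in\mathcal M_d$, then $\mathbf 0\le T^\downarrow_{d,C}{\boldsymbol\gamma}\le{\boldsymbol\zeta}$, where $\zeta_u=C^{-2|u|}\gamma_u$.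
   Context: Write $[d]=\{1,\dots,d\}$ if $d\in\mathbb N$ and $[d]=\mathbb N$ if $d=\infty$; $[s]=\{1,\dots,s\}$. $\mathcal U_d$ is the set of finite subsets of $[d]$; weights are families $(\gamma_u)_{u\in\mathcal U_d}$ of non-negative reals ($\mathcal W_d$), compared componentwise; $\mathbf 0$ is the zero family. POD weights: $\gamma_u=\Gamma_{|u|}\prod_{j\in u}\gamma_j$ for a non-increasing sequence $(\gamma_j)_{j\in[d]}$ of non-negative reals and non-negative reals $(\Gamma_k)_{k\in[d]\cup\{0\}}$ with $\Gamma_k\le C_a(k!)^a$ for all $k$, for some constants $a,C_a>0$. $(\Delta_v{\boldsymbol\gamma})_u=\sum_{w\subseteq v}(-1)^{|w|}\gamma_{u\cup w}$; $\mathcal M_d$ is the set of weights with $\Delta_v{\boldsymbol\gamma}\ge\mathbf 0$ for all $v$. For $C>0$: $\mathcal S_{d,C}=\{{\boldsymbol\gamma}\in\mathcal W_d:\sum_vC^{2|v|}\gamma_v<\infty\}$; $(T^\uparrow_{d,C}{\boldsymbol\gamma})_u=\sum_{v\supseteq u}C^{2|v|}\gamma_v$ on $\mathcal S_{d,C}$; on $\mathcal M_d$, $(T^\downarrow_{d,C}{\boldsymbol\gamma})_u=C^{-2|u|}(\Delta_{[d]\setminus u}{\boldsymbol\gamma})_u$ if $d\in\mathbb N$ and $C^{-2|u|}\lim_{s\to\infty}(\Delta_{[s]\setminus u}{\boldsymbol\gamma})_u$ if $d=\infty$. *)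

(* Defs.v *)
From HB Require Import structures.
From mathcomp Require Import all_boot all_order all_algebra.
From mathcomp Require Import finmap.
From mathcomp Require Import all_classical all_reals all_analysis.
Set Implicit Arguments. Unset Strict Implicit. Unset Printing Implicit Defensive.
Import Order.TTheory GRing.Theory Num.Theory.
Import numFieldNormedType.Exports.
Local Open Scope ring_scope.
Local Open Scope classical_set_scope.

(* d ∈ ℕ ∪ {∞} is encoded as an option nat: Some n = n, None = ∞. *)
(* Coordinates are 1-based: [d] = {1,...,d} or {1,2,3,...}. *)
Definition inD (d : option nat) (j : nat) : bool :=
  (0 < j)%N && (if d is Some n then (j <= n)%N else true).

Definition Ud (d : option nat) : set {fset nat} :=
  [set u | forall j, j \in u -> inD d j].

Definition fin_range (s : nat) : {fset nat} := seq_fset tt (iota 1 s).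

Section Weights.
Variable R : realType.

Definition Delta (g : {fset nat} -> R) (v u : {fset nat}) : R :=
  \sum_(w <- fpowerset v) (-1) ^+ #|` w| * g (u `|` w)%fset.

Definition Md (d : option nat) (g : {fset nat} -> R) : Prop :=
  forall v u, Ud d v -> Ud d u -> 0 <= Delta g v u.

Definition Sdc (d : option nat) (C : R) (g : {fset nat} -> R) : Prop :=
  (\esum_(v in Ud d) ((C ^+ (2 * #|` v|)) * g v)%:E < +oo)%E.

(* (T^↑_{d,C} γ)_u = Σ_{v ⊇ u, v ∈ U_d} C^{2|v|} γ_v  (finite when γ ∈ S_{d,C}) *)
Definition Tup (d : option nat) (C : R) (g : {fset nat} -> R) (u : {fset nat}) : R :=
  fine (\esum_(v in [set v | Ud d v /\ (u `<=` v)%fset])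
          ((C ^+ (2 * #|` v|)) * g v)%:E).

Definition Tdown (d : option nat) (C : R) (g : {fset nat} -> R) (u : {fset nat}) : R :=
  C ^- (2 * #|` u|) *
  (match d with
   | Some n => Delta g (fin_range n `\` u)%fset u
   | None => limn (fun s : nat => Delta g (fin_range s `\` u)%fset u)
   end).

Definition POD (d : option nat) (a Ca : R) (gs Gam : nat -> R)
    (g : {fset nat} -> R) : Prop :=
  [/\ 0 < a /\ 0 < Ca,
      (forall j, inD d j -> 0 <= gs j),
      (forall i j, inD d i -> inD d j -> (i <= j)%N -> gs j <= gs i),
      (forall k, (if d is Some n then (k <= n)%N else true) ->
                 0 <= Gam k /\ Gam k <= Ca * (k`!%:R `^ a)) &
      (forall u, Ud d u -> g u = Gam #|` u| * \prod_(j <- u) gs j)].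

End Weights.

(* Main.v *)
Require Import Defs.
From HB Require Import structures.
From mathcomp Require Import all_boot all_order all_algebra.
From mathcomp Require Import finmap.
From mathcomp Require Import all_classical all_reals all_analysis.
Import Order.TTheory GRing.Theory Num.Theory.
Import numFieldNormedType.Exports.
Local Open Scope ring_scope.
Local Open Scope classical_set_scope.

Module Helpers.
Local Open Scope fset_scope.
Section P2.
Variable R : realType.
Implicit Types (g : {fset nat} -> R).

Lemma Delta_U1 g (v u : {fset nat}) j : j \notin v ->
  Delta g (j |` v) u = Delta g v u - Delta g v (j |` u).
Proof.
move=> jv; rewrite /Delta (big_fsetID _ (fun w : {fset nat} => j \in w)) /= addrC.
congr (_ + _)%R.
  apply: eq_fbigl => x; rewrite !inE !fpowersetE.
  apply/andP/idP => [[/fsubsetP xs jx]|/fsubsetP xs]; last first.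
    split; first by apply/fsubsetP => y /xs yv; rewrite inE yv orbT.
    by apply: contra jv => /xs.
  apply/fsubsetP => y yx; have := xs _ yx; rewrite !inE => /orP[/eqP yj|//].
  by move: jx; rewrite -yj yx.
have -> : [fset x in fpowerset (j |` v) | j \in x] = [fset j |` w | w in fpowerset v].
  apply/fsetP => x; rewrite !inE; apply/andP/imfsetP => [[xs jx]|[w /= wv ->]].
    exists (x `\ j) => /=; last by rewrite fsetD1K.
    rewrite fpowersetE; apply/fsubsetP => y; rewrite !inE => /andP[yj yx].
    move: xs; rewrite fpowersetE => /fsubsetP /(_ _ yx); rewrite inE.
    by rewrite !inE (negbTE yj).
  split; last by rewrite fset1U1.
  by rewrite fpowersetE fsetUS // -fpowersetE.
rewrite big_imfset /=; last first.
  move=> w1 w2; rewrite !fpowersetE => /fsubsetP w1v /fsubsetP w2v e.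
  apply/fsetP => y; move/fsetP: e => /(_ y); rewrite !inE.
  case: (eqVneq y j) => [->|//] _.
  by rewrite (negbTE (contra (w1v j) jv)) (negbTE (contra (w2v j) jv)).
rewrite -sumrN; apply: eq_big_seq => w; rewrite fpowersetE => /fsubsetP wv.
rewrite cardfsU1 (negbTE (contra (wv j) jv)) /= add1n exprS mulN1r mulNr.
by rewrite fsetUA [u `|` _]fsetUC.
Qed.

Lemma Delta0 g u : Delta g fset0 u = g u.
Proof. by rewrite /Delta fpowerset0 big_seq_fset1 cardfs0 expr0 mul1r fsetU0. Qed.

Lemma Ud_sub d (v w : {fset nat}) : Ud d w -> v `<=` w -> Ud d v.
Proof. by move=> Uw /fsubsetP vw j /vw /Uw. Qed.

Lemma Ud_U1 d (u : {fset nat}) j : Ud d u -> inD d j -> Ud d (j |` u).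
Proof. by move=> Uu dj y; rewrite !inE => /orP[/eqP ->|/Uu]. Qed.

Lemma Delta_le g d u : Md d g -> Ud d u ->
  forall v, Ud d v -> Delta g v u <= g u.
Proof.
move=> Mg Uu v; move: {2}#|`v| (erefl #|`v|) => n; elim: n v => [|n IH] v cv Uv.
  by move/eqP: cv; rewrite cardfs_eq0 => /eqP ->; rewrite Delta0.
have : v != fset0 by rewrite -cardfs_eq0 cv.
case/fset0Pn => j jv.
have Uv' : Ud d (v `\ j) by apply: Ud_sub Uv _; apply: fsubsetDl.
rewrite -(fsetD1K jv) Delta_U1 ?fsetD11 //.
rewrite lerBlDr (le_trans (IH _ _ Uv')) ?lerDl //.
  by move: cv; rewrite (cardfsD1 j) jv add1n => -[].
by apply: Mg => //; apply: Ud_U1 => //; apply: Uv.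
Qed.

Lemma Delta_ge0 g d u v : Md d g -> Ud d u -> Ud d v -> 0 <= Delta g v u.
Proof. by move=> Mg Uu Uv; apply: Mg. Qed.

Lemma in_fin_range s y : (y \in fin_range s) = (0 < y <= s)%N.
Proof. by rewrite /fin_range seq_fsetE mem_iota add1n ltnS. Qed.

Lemma Ud_fr d s (u : {fset nat}) : (if d is Some n then (s <= n)%N else true) ->
  Ud d (fin_range s `\` u).
Proof.
move=> hs y; rewrite !inE in_fin_range => /andP[_ /andP[y0 ys]].
rewrite /inD y0 /=; case: d hs => // n sn; exact: leq_trans ys sn.
Qed.

Lemma part2 (d : option nat) (C : R) g : 0 < C ->
  Md d g -> forall u, Ud d u ->
       0 <= Tdown d C g u /\ Tdown d C g u <= C ^- (2 * #|` u|) * g u.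
Proof.
move=> C0 Mg u Uu.
have Ck : 0 <= C ^- (2 * #|` u|) by rewrite invr_ge0 exprn_ge0 // ltW.
suff [h0 h1] : 0 <= (match d with
   | Some n => Delta g (fin_range n `\` u)%fset u
   | None => limn (fun s : nat => Delta g (fin_range s `\` u)%fset u)
   end) /\ (match d with
   | Some n => Delta g (fin_range n `\` u)%fset u
   | None => limn (fun s : nat => Delta g (fin_range s `\` u)%fset u)
   end) <= g u.
  by rewrite /Tdown; split; [apply: mulr_ge0|apply: ler_wpM2l].
case: d Mg Uu => [n|] Mg Uu.
  have U := Ud_fr (Some n) n u (leqnn n).
  by split; [apply: Delta_ge0 Mg Uu U|apply: Delta_le Mg Uu _ U].
set a := fun s : nat => _.
have a0 : forall s, 0 <= a s by move=> s; apply: Delta_ge0 Mg Uu (Ud_fr None s u isT).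
have a1 : forall s, a s <= g u by move=> s; apply: Delta_le Mg Uu _ (Ud_fr None s u isT).
have ad : nonincreasing_seq a.
  apply/nonincreasing_seqP => s; rewrite /a.
  have [su|su] := boolP (s.+1 \in u).
    have -> : fin_range s.+1 `\` u = fin_range s `\` u; last by [].
    apply/fsetP => y; rewrite !inE !in_fin_range (leq_eqVlt y s.+1) ltnS.
    by case: (eqVneq y s.+1) => [->|_] /=; rewrite ?su ?andbF.
  have -> : fin_range s.+1 `\` u = s.+1 |` (fin_range s `\` u).
    apply/fsetP => y; rewrite !inE !in_fin_range (leq_eqVlt y s.+1) ltnS.
    by case: (eqVneq y s.+1) => [->|_] /=; rewrite ?su.
  rewrite Delta_U1; last by rewrite !inE in_fin_range ltnn !andbF.
  rewrite gerBl; apply: Mg; first exact: Ud_fr.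
  by apply: Ud_U1 => //.
have ac : cvgn a.
  apply: nonincreasing_is_cvgn => //; exists 0 => _ [s _ <-]; exact: a0.
split; [apply: limr_ge|apply: limr_le] => //; by near=> s.
Unshelve. all: by end_near.
Qed.
End P2.
Lemma bin_le2 n j : ('C(n, j) <= 2 ^ n)%N.
Proof.
elim: n j => [|n IH] [|j] //=; first by rewrite expn_gt0.
by rewrite binS expnS mul2n -addnn leq_add.
Qed.

Lemma fact_le m k : ((m + k)`! <= 2 ^ (m + k) * (m`! * k`!))%N.
Proof.
rewrite -[in X in (X <= _)%N](bin_fact (leq_addr k m)) addKn.
by rewrite leq_mul2r bin_le2 orbT.
Qed.

Section P1.
Variable R : realType.

Lemma prod_const_seq (s : seq nat) (x : R) : \prod_(j <- s) x = x ^+ size s.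
Proof. by elim: s => [|y s IH]; rewrite ?big_nil ?big_cons ?IH ?exprS. Qed.

Lemma prod_disj (u w : {fset nat}) (F : nat -> R) : [disjoint u & w] ->
  \prod_(j <- u `|` w) F j = \prod_(j <- u) F j * \prod_(j <- w) F j.
Proof.
move=> /fdisjointP dj; rewrite (big_fsetID _ (mem u)) /=; congr (_ * _).
  by apply: eq_fbigl => x; rewrite !inE /=; case: (x \in u); rewrite ?andbF ?andbT.
apply: eq_fbigl => x; rewrite !inE /=; case xu: (x \in u) => /=; last by rewrite andbT.
by rewrite (negbTE (dj _ xu)).
Qed.

Lemma card_disj (u w : {fset nat}) : [disjoint u & w] ->
  #|` u `|` w| = (#|` u| + #|` w|)%N.
Proof. by move=> /eqP dj; rewrite cardfsU dj cardfs0 subn0. Qed.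

Lemma powR_expn (x : R) n a : 0 <= x -> (x ^+ n) `^ a = (x `^ a) ^+ n.
Proof.
move=> x0; elim: n => [|n IH]; first by rewrite !expr0 powR1.
by rewrite !exprS powRM ?exprn_ge0 // IH.
Qed.

Lemma fact_powR m k (a : R) : 0 <= a ->
  (m + k)`!%:R `^ a <= (2 `^ a) ^+ (m + k) * ((m`!%:R `^ a) * (k`!%:R `^ a)).
Proof.
move=> a0; rewrite -powR_expn // -!powRM ?mulr_ge0 ?exprn_ge0 //.
apply: ge0_ler_powR => //; rewrite ?nnegrE //.
by rewrite -natrM -natrX -natrM ler_nat fact_le.
Qed.

Lemma card_Ud n (v : {fset nat}) : Ud (Some n) v -> (#|` v| <= n)%N.
Proof.
move=> Uv; have : v `<=` fin_range n.
  apply/fsubsetP => y /Uv; rewrite /inD /fin_range seq_fsetE mem_iota add1n ltnS.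
  by [].
move/fsubset_leq_card; rewrite /fin_range.
by rewrite -[#|` seq_fset _ _|]/(size (seq_fset tt (iota 1 n))) size_seq_fset undup_id ?iota_uniq // size_iota.
Qed.


Lemma pw (d : option nat) (C a Ca : R) (gs Gam : nat -> R) (g : {fset nat} -> R)
    (u w : {fset nat}) :
  0 < C -> POD d a Ca gs Gam g -> Ud d u -> Ud d w -> [disjoint u & w] ->
  C ^+ (2 * #|` u `|` w|) * g (u `|` w) <=
  (Ca * ((#|` u|)`!%:R `^ a) * \prod_(j <- u) (2 `^ a * C ^+ 2 * gs j)) *
  (((#|` w|)`!%:R `^ a) * \prod_(j <- w) (2 `^ a * C ^+ 2 * gs j)).
Proof.
move=> C0 [[a0 Ca0] gs0 _ Gb gE] Uu Uw dj.
have Uuw : Ud d (u `|` w) by move=> j; rewrite inE => /orP[/Uu|/Uw].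
rewrite gE // card_disj // prod_disj //.
have Pu : 0 <= \prod_(j <- u) gs j.
  by rewrite big_seq; apply: prodr_ge0 => j /Uu /gs0.
have Pw : 0 <= \prod_(j <- w) gs j.
  by rewrite big_seq; apply: prodr_ge0 => j /Uw /gs0.
rewrite !big_split /= !prod_const_seq.
rewrite -[size u]/#|` u| -[size w]/#|` w|.
set m := #|` u|; set k := #|` w|.
have [G0 G1] : 0 <= Gam (m + k)%N /\ Gam (m + k)%N <= Ca * ((m + k)`!%:R `^ a).
  apply: (Gb); case: d {gs0 Gb gE} Uu Uw Uuw => // n _ _ Uuw.
  by have := @card_Ud n _ Uuw; rewrite card_disj.
have G2 : Gam (m + k)%N <= Ca * ((2 `^ a) ^+ (m + k) * ((m`!%:R `^ a) * (k`!%:R `^ a))).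
  by apply: (le_trans G1); rewrite ler_wpM2l ?(ltW Ca0) // fact_powR // ltW.
have e : (Ca * ((2 `^ a) ^+ (m + k) * ((m`!%:R `^ a) * (k`!%:R `^ a)))) *
          (\prod_(j <- u) gs j * \prod_(j <- w) gs j) * C ^+ (2 * (m + k)) =
  Ca * (m`!%:R `^ a) * ((2 `^ a) ^+ m * (C ^+ m * C ^+ m) * \prod_(j <- u) gs j) *
  ((k`!%:R `^ a) * ((2 `^ a) ^+ k * (C ^+ k * C ^+ k) * \prod_(j <- w) gs j)).
  rewrite mul2n -addnn !exprD !mulrA.
  by rewrite [LHS](ACl (1*4*2*8*10*6*5*3*9*11*7)%AC).
rewrite -e mulrC ler_wpM2r ?exprn_ge0 ?(ltW C0) //.
by rewrite ler_wpM2r ?mulr_ge0.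
Qed.


Local Open Scope ereal_scope.

Lemma esum_sub (T : choiceType) (A B : set T) (F : T -> \bar R) :
  (A `<=` B)%classic -> (forall i, B i -> 0 <= F i) ->
  \esum_(i in A) F i <= \esum_(i in B) F i.
Proof.
move=> AB F0; rewrite [X in X <= _]esum_mkcond [X in _ <= X]esum_mkcond.
apply: le_esum => i _; case: ifPn => [/set_mem/AB Bi|_]; first by rewrite mem_set.
by case: ifPn => // /set_mem /F0.
Qed.

Lemma esum_Zle (T : choiceType) (D : set T) (r : R) (F : T -> \bar R) :
  (0 <= r)%R -> (forall i, D i -> 0 <= F i) ->
  \esum_(i in D) (r%:E * F i) <= r%:E * \esum_(i in D) F i.
Proof.
move=> r0 F0; apply: ge_ereal_sup => _ [X [finX XD] <-].
rewrite fsbig_finite // big_seq -ge0_sume_distrr; last first.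
  by move=> i; rewrite in_fset_set // inE => /XD /F0.
rewrite -big_seq -fsbig_finite //; apply: lee_wpmul2l; first by rewrite lee_fin.
by apply: ereal_sup_ubound; exists X.
Qed.


Lemma g_ge0 {d : option nat} {a Ca : R} {gs Gam : nat -> R} {g : {fset nat} -> R} {v}
   : POD d a Ca gs Gam g -> Ud d v -> (0 <= g v)%R.
Proof.
move=> [_ gs0 _ Gb gE] Uv; rewrite gE //; apply: mulr_ge0.
  by case: (Gb #|` v|) => //; case: d {gs0 Gb gE} Uv => // n /card_Ud.
by rewrite big_seq; apply: prodr_ge0 => j /Uv /gs0.
Qed.

Lemma part1 (d : option nat) (C a Ca : R) (gs Gam : nat -> R) (g : {fset nat} -> R) :
  (0 < C)%R -> POD d a Ca gs Gam g ->
  let c : \bar R :=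
    (\esum_(w in Ud d)
       (((#|` w|)`!%:R `^ a) * \prod_(j <- w) (2 `^ a * C ^+ 2 * gs j))%:E)%E in
  (Sdc d C g ->
     forall u, Ud d u ->
       (C ^+ (2 * #|` u|) * g u <= Tup d C g u)%R /\
       ((Tup d C g u)%:E <=
          c * (Ca * ((#|` u|)`!%:R `^ a) *
                 \prod_(j <- u) (2 `^ a * C ^+ 2 * gs j))%:E)%E).
Proof.
move=> C0 hP c Sg u Uu.
have hP' := hP; case: hP' => [[a0 Ca0] gs0 _ _ _].
set h := fun v : {fset nat} => (C ^+ (2 * #|` v|) * g v)%R.
have h0 : forall v, Ud d v -> (0 <= h v)%R.
  by move=> v Uv; rewrite /h mulr_ge0 ?exprn_ge0 ?(ltW C0) // (g_ge0 hP Uv).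
set S := [set v | Ud d v /\ (u `<=` v)%fset].
set E := \esum_(v in S) (h v)%:E.
have SU : (S `<=` Ud d)%classic by move=> v [].
have E0 : 0 <= E by apply: esum_ge0 => v [Uv _]; rewrite lee_fin h0.
have Efin : E < +oo.
  by apply: le_lt_trans Sg; apply: esum_sub => // v Uv; rewrite lee_fin h0.
have EE : (Tup d C g u)%:E = E.
  by rewrite /Tup -/h -/S -/E fineK // ge0_fin_numE.
rewrite EE; split.
  rewrite -lee_fin EE; apply: esum_ge; exists [set u].
    by split; [exact: finite_set1| move=> v ->; split; rewrite ?fsubset_refl].
  by rewrite fsbig_set1.
set D := [set w | Ud d w /\ [disjoint u & w]%fset].
have SD : S = ((fun w => (u `|` w)%fset) @` D)%classic.
  apply/seteqP; split.
    move=> v [Uv uv]; exists (v `\` u).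
      split; first by move=> y; rewrite inE => /andP[_ /Uv].
      by apply/fdisjointP => y yu; rewrite inE yu.
    apply/fsetP => y; rewrite !inE.
    by case yu: (y \in u) => //=; rewrite (fsubsetP uv _ yu).
  move=> _ [w [Uw dj] <-]; split; last exact: fsubsetUl.
  by move=> y; rewrite inE => /orP[/Uu|/Uw].
have inj : set_inj D (fun w => u `|` w).
  move=> w1 w2 /set_mem[_ d1] /set_mem[_ d2] e; apply/fsetP => y; move/fsetP: e => /(_ y).
  rewrite !inE; case yu: (y \in u) => //= _.
  by rewrite (negbTE (fdisjointP d1 _ yu)) (negbTE (fdisjointP d2 _ yu)).
rewrite /E SD esum_image //.
set xi := (Ca * _ * _)%R.
have xi0 : (0 <= xi)%R.
  rewrite /xi !mulr_ge0 ?powR_ge0 ?(ltW Ca0) //.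
  rewrite big_seq; apply: prodr_ge0 => j /Uu /gs0 gj.
  by rewrite !mulr_ge0 ?powR_ge0 ?exprn_ge0 ?(ltW C0).
set f := fun w : {fset nat} => ((#|` w|)`!%:R `^ a * \prod_(j <- w) (2 `^ a * C ^+ 2 * gs j))%R.
have f0 : forall w, Ud d w -> (0 <= f w)%R.
  move=> w Uw; rewrite /f !mulr_ge0 ?powR_ge0 //.
  rewrite big_seq; apply: prodr_ge0 => j /Uw /gs0 gj.
  by rewrite !mulr_ge0 ?powR_ge0 ?exprn_ge0 ?(ltW C0).
apply: (@le_trans _ _ (\esum_(w in D) (xi%:E * (f w)%:E))).
  apply: le_esum => w [Uw dj]; rewrite -EFinM lee_fin. exact: (@pw _ _ _ _ _ _ _ _ _ C0 hP Uu Uw dj).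
apply: le_trans (@esum_Zle _ D xi (fun w => (f w)%:E) xi0 _) _; first by move=> w [Uw _]; rewrite lee_fin f0.
rewrite (muleC c); apply: lee_wpmul2l; first by rewrite lee_fin.
by apply: esum_sub => [w []|w Uw] //; rewrite lee_fin f0.
Qed.

End P1.
End Helpers.
Import Helpers.

Theorem mainTheorem9 (R : realType) (d : option nat) (C a Ca : R)
    (gs Gam : nat -> R) (g : {fset nat} -> R) :
  0 < C -> POD d a Ca gs Gam g ->
  let c : \bar R :=
    (\esum_(w in Ud d)
       (((#|` w|)`!%:R `^ a) * \prod_(j <- w) (2 `^ a * C ^+ 2 * gs j))%:E)%E in
  (Sdc d C g ->
     forall u, Ud d u ->
       C ^+ (2 * #|` u|) * g u <= Tup d C g u /\
       ((Tup d C g u)%:E <=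
          c * (Ca * ((#|` u|)`!%:R `^ a) *
                 \prod_(j <- u) (2 `^ a * C ^+ 2 * gs j))%:E)%E) /\
  (Md d g ->
     forall u, Ud d u ->
       0 <= Tdown d C g u /\ Tdown d C g u <= C ^- (2 * #|` u|) * g u).
Proof.
move=> C0 hP c; split.
  exact: (@part1 _ d C a Ca gs Gam g C0 hP).
exact: (@part2 _ d C g C0).
Qed.
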